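(* Let $G$ be a graph (possibly infinite) and $M$ a matching in $G$. Then $M$ has maximal support (i.e. there is no matching $N$ in $G$ with $supp(N)\supsetneq supp(M)$) if and only if there exists no finitely improving and no infinitely improving $M$-alternating path in $G$.
   Context: The support $supp(M)$ of a matching $M$ is the set of vertices incident with an edge of $M$. A path is $M$-alternating if of any two consecutive edges on it exactly one lies in $M$. An $M$-alternating path is finitely improving if it is finite, has at least one edge, and both its endpoints lie outside $supp(M)$. It is infinitely improving if it is a one-way infinite path (a ray, with exactly one endpoint) whose endpoint does not belong to $supp(M)$. *)

(* Defs.v *)
(* graphs may be infinite, so vertices form an arbitrary Type.
   A (simple, undirected) graph is a symmetric irreflexive relation [adj].
   A set of edges (e.g. a matching) is a symmetric relation [m] on vertices,
   where [m x y] means that the edge xy belongs to the set. *)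

Section Matchings.
Variable V : Type.
Variable adj : V -> V -> Prop.

Definition is_matching (m : V -> V -> Prop) : Prop :=
  (forall x y, m x y -> m y x) /\
  (forall x y, m x y -> adj x y) /\
  (forall x y z, m x y -> m x z -> y = z).

Definition supp (m : V -> V -> Prop) (v : V) : Prop := exists w, m v w.

Definition max_support (m : V -> V -> Prop) : Prop :=
  ~ exists n : V -> V -> Prop,
      is_matching n /\
      (forall v, supp m v -> supp n v) /\
      (exists v, supp n v /\ ~ supp m v).

Definition alt_at (m : V -> V -> Prop) (f : nat -> V) (i : nat) : Prop :=
  m (f i) (f (S i)) <-> ~ m (f (S i)) (f (S (S i))).

Definition fin_improving (m : V -> V -> Prop) (n : nat) (f : nat -> V) : Prop :=
  1 <= n /\
  (forall i j, i <= n -> j <= n -> f i = f j -> i = j) /\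
  (forall i, i < n -> adj (f i) (f (S i))) /\
  (forall i, S i < n -> alt_at m f i) /\
  ~ supp m (f 0) /\ ~ supp m (f n).

Definition inf_improving (m : V -> V -> Prop) (f : nat -> V) : Prop :=
  (forall i j, f i = f j -> i = j) /\
  (forall i, adj (f i) (f (S i))) /\
  (forall i, alt_at m f i) /\
  ~ supp m (f 0).

End Matchings.

(* Main.v *)
Require Import Defs.
From Stdlib Require Import Classical ClassicalEpsilon Lia PeanoNat Bool.

Lemma evS n : Nat.even (S n) = negb (Nat.even n).
Proof.
  induction n as [|n IH]; [reflexivity|].
  change (Nat.even n = negb (Nat.even (S n))). rewrite IH, negb_involutive. reflexivity.
Qed.

Lemma even_double k : Nat.even (2*k) = true.
Proof. induction k; [reflexivity|]. replace (2 * S k) with (S (S (2*k))) by lia. exact IHk. Qed.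

Lemma min_ex (P : nat -> Prop) : (exists n, P n) -> exists n, P n /\ forall k, k < n -> ~ P k.
Proof.
  intros [n Hn]. revert Hn. induction n as [n IH] using (well_founded_induction Nat.lt_wf_0).
  intros Hn. destruct (classic (exists k, k < n /\ P k)) as [[k [Hk1 Hk2]]|Hno].
  - exact (IH k Hk1 Hk2).
  - exists n. split; [exact Hn|]. intros k Hk HP. apply Hno. eauto.
Qed.

Lemma dir1 (V : Type) (adj : V -> V -> Prop)
  (adj_sym : forall x y, adj x y -> adj y x)
  (m : V -> V -> Prop) (Hm : is_matching V adj m)
  (R : nat -> Prop) (f : nat -> V)
  (R1 : R 1) (Rdown : forall i, R (S i) -> R i)
  (Hinj : forall i j, R i -> R j -> f i = f j -> i = j)
  (Hadj : forall i, R (S i) -> adj (f i) (f (S i)))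
  (Halt : forall i, R (S (S i)) -> alt_at V m f i)
  (H0 : ~ supp V m (f 0))
  (Hlast : forall j, R j -> ~ R (S j) -> ~ supp V m (f j)) :
  ~ max_support V adj m.
Proof.
  destruct Hm as [msym [madj muniq]].
  assert (R0 : R 0) by auto.
  assert (Par : forall i, R (S i) -> (m (f i) (f (S i)) <-> Nat.even i = false)).
  { induction i as [|i IH]; intros HR.
    - split; [intro H; exfalso; apply H0; eexists; eauto | discriminate].
    - specialize (IH (Rdown _ HR)). specialize (Halt i HR). unfold alt_at in Halt.
      rewrite evS. destruct (Nat.even i); simpl in *.
      + split; [intros _; reflexivity|intros _].
        destruct (classic (m (f (S i)) (f (S (S i))))) as [h|h]; [exact h|].
        exfalso. apply (proj2 Halt) in h. apply IH in h. discriminate.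
      + split; [intros H|discriminate].
        exfalso. apply (proj1 Halt); [apply IH; reflexivity | exact H]. }
  assert (Hev : forall k, R (2*k) -> R (S (2*k))).
  { intros k Hk. destruct (classic (R (S (2*k)))) as [h|h]; [exact h|].
    exfalso. apply (Hlast _ Hk h). destruct k as [|k].
    - exfalso. apply h. exact R1.
    - replace (2 * S k) with (S (S (2*k))) in * by lia.
      exists (f (S (2*k))). apply msym. apply (Par _ Hk).
      rewrite evS, even_double. reflexivity. }
  set (onP := fun x => exists i, R i /\ x = f i).
  assert (K : forall x y, m x y -> onP y -> onP x).
  { intros x y Hxy [j [Rj ->]].
    destruct j as [|j]; [exfalso; apply H0; eexists; eauto|].
    destruct (classic (R (S (S j)))) as [RS|RS];
      [|exfalso; apply (Hlast _ Rj RS); eexists; eauto].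
    destruct (classic (m (f (S j)) (f (S (S j))))) as [h|h].
    - exists (S (S j)). split; [exact RS|]. eapply muniq; eauto.
    - assert (m (f j) (f (S j))) as h2 by (apply (proj2 (Halt j RS)); exact h).
      exists j. split; [auto|]. eapply muniq; eauto. }
  set (Nn := fun x y => (~ onP x /\ m x y) \/
        (exists k, R (S (2*k)) /\ ((x = f (2*k) /\ y = f (S (2*k))) \/
                                   (x = f (S (2*k)) /\ y = f (2*k))))).
  intro Hmax. apply Hmax. exists Nn. split; [|split].
  - split; [|split].
    + intros x y [[h1 h2]|[k [hk [[-> ->]|[-> ->]]]]].
      * left. split; [|auto]. intro hy. apply h1. eapply K; [|exact hy]. auto.
      * right. exists k. split; auto.
      * right. exists k. split; auto.
    + intros x y [[h1 h2]|[k [hk [[-> ->]|[-> ->]]]]]; auto.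
    + intros x y z [[h1 h2]|[k [hk hx]]] [[h3 h4]|[k' [hk' hx']]].
      * eauto.
      * exfalso. apply h1. destruct hx' as [[-> _]|[-> _]];
        [exists (2*k') | exists (S (2*k'))]; split; auto.
      * exfalso. apply h3. destruct hx as [[-> _]|[-> _]];
        [exists (2*k) | exists (S (2*k))]; split; auto.
      * destruct hx as [[-> ->]|[-> ->]]; destruct hx' as [[e ->]|[e ->]];
        apply Hinj in e; auto; try lia;
        assert (k = k') by lia; subst; reflexivity.
  - intros v [w Hvw]. destruct (classic (onP v)) as [hp|hp].
    + destruct hp as [i [Ri ->]]. destruct (Nat.Even_or_Odd i) as [[k ->]|[k ->]].
      * exists (f (S (2*k))). right. exists k. split; auto.
      * exists (f (2*k)). right. exists k. replace (2*k+1) with (S (2*k)) by lia.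
        split; [replace (2*k+1) with (S (2*k)) in Ri by lia; auto|auto].
    + exists w. left. auto.
  - exists (f 0). split; [|exact H0]. exists (f 1). right. exists 0. split; [exact R1|]. left. auto.
Qed.

Lemma dir2_path (V : Type) (adj : V -> V -> Prop)
  (adj_irr : forall x, ~ adj x x)
  (m N : V -> V -> Prop) (Hm : is_matching V adj m) (HN : is_matching V adj N)
  (R : nat -> Prop) (f : nat -> V) (Rdown : forall i, R (S i) -> R i)
  (Hedge : forall i, R (S i) -> (if Nat.even i then N else m) (f i) (f (S i)))
  (H0 : ~ supp V m (f 0)) :
  (forall i j, R i -> R j -> f i = f j -> i = j) /\
  (forall i, R (S i) -> adj (f i) (f (S i))) /\
  (forall i, R (S (S i)) -> alt_at V m f i).
Proof.
  assert (RL : forall i j, i <= j -> R j -> R i).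
  { intros i j Hij. induction Hij; auto. }
  assert (XM : forall b : bool, is_matching V adj (if b then N else m)).
  { intros []; assumption. }
  assert (Dist : forall j i, i < j -> R j -> f i = f j -> False).
  { induction j as [j IH] using (well_founded_induction Nat.lt_wf_0).
    intros i Hij Rj Heq. destruct j as [|j']; [lia|].
    destruct (XM (Nat.even i)) as [xs [xa xu]].
    destruct (bool_dec (Nat.even i) (Nat.even (S j'))) as [pe|pd].
    - destruct i as [|i'].
      + destruct Hm as [ms _]. apply H0. exists (f j'). apply ms. rewrite Heq.
        pose proof (Hedge j' Rj) as E.
        assert (Nat.even j' = false) as ej by (rewrite evS in pe; destruct (Nat.even j'); simpl in *; congruence).
        rewrite ej in E. exact E.
      + assert (Nat.even i' = Nat.even j') as pe'
          by (rewrite !evS in pe; destruct (Nat.even i'), (Nat.even j'); simpl in *; congruence).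
        destruct (XM (Nat.even i')) as [ys [ya yu]].
        pose proof (Hedge i' (RL (S i') (S j') ltac:(lia) Rj)) as E1.
        pose proof (Hedge j' Rj) as E2. rewrite <- pe' in E2.
        apply (IH j' ltac:(lia) i' ltac:(lia) (Rdown _ Rj)).
        eapply yu; [apply ys; exact E1|]. rewrite Heq. apply ys. exact E2.
    - assert (Nat.even j' = Nat.even i) as pe'
        by (rewrite evS in pd; destruct (Nat.even i), (Nat.even j'); simpl in *; congruence).
      pose proof (Hedge i (RL (S i) (S j') ltac:(lia) Rj)) as E1.
      pose proof (Hedge j' Rj) as E2. rewrite pe' in E2.
      assert (f (S i) = f j') as e.
      { eapply xu; [exact E1|]. rewrite Heq. apply xs. exact E2. }
      destruct (Nat.lt_trichotomy (S i) j') as [lt|[eq|gt]].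
      + exact (IH j' ltac:(lia) (S i) lt (Rdown _ Rj) e).
      + subst j'. rewrite evS in pe'. destruct (Nat.even i); discriminate.
      + assert (j' = i) by lia. subst j'. apply (adj_irr (f i)).
        apply xa. rewrite <- Heq in E2. exact E2. }
  assert (Inj : forall i j, R i -> R j -> f i = f j -> i = j).
  { intros i j Ri Rj e. destruct (Nat.lt_trichotomy i j) as [lt|[eq|gt]]; auto.
    - exfalso. exact (Dist j i lt Rj e).
    - exfalso. exact (Dist i j gt Ri (eq_sym e)). }
  split; [exact Inj|split].
  - intros i Ri. destruct (XM (Nat.even i)) as [_ [xa _]]. apply xa. apply Hedge. exact Ri.
  - intros i Ri. destruct Hm as [ms [ma mu]]. unfold alt_at.
    pose proof (Hedge i (Rdown _ Ri)) as E1. pose proof (Hedge (S i) Ri) as E2.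
    rewrite evS in E2. destruct (Nat.even i) eqn:ei; simpl in E2.
    + split; [|intros h; exfalso; exact (h E2)].
      intros h. exfalso. destruct i as [|i'].
      * apply H0. eexists; exact h.
      * pose proof (Hedge i' (Rdown _ (Rdown _ Ri))) as E0.
        rewrite evS in ei. destruct (Nat.even i'); simpl in ei; [discriminate|].
        assert (f i' = f (S (S i'))) as e by (eapply mu; [apply ms; exact E0|exact h]).
        apply Inj in e; [lia| |exact (Rdown _ Ri)]. apply Rdown, Rdown, Rdown. exact Ri.
    + split; [intros _ h|intros _; exact E1].
      assert (f i = f (S (S i))) as e by (eapply mu; [apply ms; exact E1|exact h]).
      apply Inj in e; [lia| |exact Ri]. apply Rdown, Rdown. exact Ri.
Qed.

Fixpoint seqf (V : Type) (v : V) (pN pM : V -> V) (i : nat) : V :=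
  match i with
  | 0 => v
  | S i => (if Nat.even i then pN else pM) (seqf V v pN pM i)
  end.

Lemma pick_fun (V : Type) (r : V -> V -> Prop) :
  exists p : V -> V, forall x, supp V r x -> r x (p x).
Proof.
  assert (H : forall x, exists y, supp V r x -> r x y).
  { intros x. destruct (classic (supp V r x)) as [[y Hy]|h].
    - exists y. auto.
    - exists x. intro; contradiction. }
  exists (fun x => proj1_sig (constructive_indefinite_description _ (H x))).
  intros x. exact (proj2_sig (constructive_indefinite_description _ (H x))).
Qed.

Theorem lemma3p3 (V : Type) (adj : V -> V -> Prop)
  (adj_sym : forall x y, adj x y -> adj y x)
  (adj_irr : forall x, ~ adj x x)
  (m : V -> V -> Prop) (Hm : is_matching V adj m) :
  max_support V adj m <->
  ((~ exists (n : nat) (f : nat -> V), fin_improving V adj m n f) /\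
   (~ exists f : nat -> V, inf_improving V adj m f)).
Proof.
  split.
  - intros Hmax. split.
    + intros [n [f [H1 [Hi [Ha [Hal [H0 Hn]]]]]]].
      apply (dir1 V adj adj_sym m Hm (fun i => i <= n) f); auto.
      * intros; lia.
      * intros i Hi' Hs. assert (i = n) by lia. subst. exact Hn.
    + intros [f [Hi [Ha [Hal H0]]]].
      apply (dir1 V adj adj_sym m Hm (fun _ => True) f); auto.
  - intros [Hfin Hinf] [N [HN [Hsub [v [Hv Hvm]]]]].
    destruct (pick_fun V N) as [pN HpN].
    destruct (pick_fun V m) as [pM HpM].
    set (f := seqf V v pN pM).
    assert (fS : forall i, f (S i) = (if Nat.even i then pN else pM) (f i)) by reflexivity.
    set (R := fun i => forall j, j < i -> Nat.even j = false -> supp V m (f j)).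
    assert (Rdown : forall i, R (S i) -> R i).
    { intros i H j Hj. apply H. lia. }
    assert (Hedge : forall i, R (S i) -> (if Nat.even i then N else m) (f i) (f (S i))).
    { intros i Ri. rewrite fS. destruct (Nat.even i) eqn:ei.
      - apply HpN. destruct i as [|i'].
        + exact Hv.
        + apply Hsub. rewrite evS in ei.
          destruct (Nat.even i') eqn:ei'; [discriminate|].
          assert (supp V m (f i')) as s by (apply Ri; [lia|exact ei']).
          apply HpM in s. destruct Hm as [ms _].
          exists (f i'). apply ms. rewrite fS, ei'. exact s.
      - apply HpM. apply Ri; [lia|exact ei]. }
    destruct (dir2_path V adj adj_irr m N Hm HN R f Rdown Hedge Hvm) as [Inj [Adj Alt]].
    destruct (classic (forall i, R i)) as [Rall|Rnot].
    + apply Hinf. exists f. split; [|split; [|split]]; auto.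
    + assert (exists j, Nat.even j = false /\ ~ supp V m (f j)) as Ex.
      { apply not_all_ex_not in Rnot. destruct Rnot as [i Hi].
        unfold R in Hi. apply not_all_ex_not in Hi. destruct Hi as [j Hj].
        exists j. destruct (Nat.even j) eqn:ej.
        - exfalso. apply Hj. intros _ h; discriminate.
        - split; [reflexivity|]. intro s. apply Hj. intros; exact s. }
      destruct (min_ex _ Ex) as [n [[en sn] Hmin]].
      assert (Rle : forall i, i <= n -> R i).
      { intros i Hi j Hj ej. apply NNPP. intro ns. apply (Hmin j); [lia|auto]. }
      apply Hfin. exists n, f. split; [|split; [|split; [|split; [|split]]]].
      * destruct n; [discriminate|lia].
      * intros i j Hi Hj e. apply Inj; auto.
      * intros i Hi. apply Adj. apply Rle. lia.
      * intros i Hi. apply Alt. apply Rle. lia.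
      * exact Hvm.
      * exact sn.
Qed.
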